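(* Assume $\langle f\rangle_X=0$, $N/p\in\mathbb N$, and that $\psi$ satisfies (A1) and (A2). Then there exists a constant $C_3$, depending only on $c_\psi,C_\psi,C'_\psi$ and $p$ (in particular independent of $\epsilon$ and $f$), such that \[ \|u^0-u\|_{L^2}\le C_3\,\epsilon\,\|f\|_{L^2}, \] where $u$ solves the atomistic problem and $u^0$ solves the homogenized problem.
   Context: Let $\epsilon>0$ and $N,p$ be positive integers, with the normalization $N\epsilon=1$. Set $X_i=\epsilon i$ ($i\in\mathbb Z$) and $Y_j=j$. $U^N_{\rm per}(\epsilon\mathbb Z)$ is the space of functions $u:\epsilon\mathbb Z\to\mathbb R$ with $u(X_{i+N})=u(X_i)$ for all $i$; $U^N_\#(\epsilon\mathbb Z)$ is the subspace with $\langle u\rangle_X:=\frac1N\sum_{i=1}^N u(X_i)=0$. For $u,v\in U^N_{\rm per}(\epsilon\mathbb Z)$: $\langle u,v\rangle_X=\frac1N\sum_{i=1}^N u(X_i)v(X_i)$, $Du(X_i)=(u(X_{i+1})-u(X_i))/\epsilon$, $\|u\|_{L^2}=(\frac1N\sum_{i=1}^N|u(X_i)|^2)^{1/2}$. A two-scale function is $g:\epsilon\mathbb Z\times\mathbb Z\to\mathbb R$ with $g(X_{i+N},Y_j)=g(X_i,Y_j)=g(X_i,Y_{j+p})$; set $D_Xg(X_i,Y_j)=(g(X_{i+1},Y_j)-g(X_i,Y_j))/\epsilon$, $\langle g\rangle_Y(X_i)=\frac1p\sum_{j=1}^p g(X_i,Y_j)$, $\|g\|_{L^\infty(N,p)}=\max_{1\le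 i\le N,1\le j\le p}|g(X_i,Y_j)|$. $\psi$ is a two-scale function satisfying (A1) $0<c_\psi\le\psi(X_i,Y_j)\le C_\psi$ for all $i,j$, and (A2) $\|D_X\psi\|_{L^\infty(N,p)}\le C'_\psi$. Define $\psi^\epsilon(X_i)=\psi(X_i,X_i/\epsilon)$ and $\psi^0(X_i)=\langle1/\psi(X_i,\cdot)\rangle_Y^{-1}$. $f\in U^N_{\rm per}(\epsilon\mathbb Z)$. Atomistic problem: $u\in U^N_\#(\epsilon\mathbb Z)$ with $\langle\psi^\epsilon Du,Dv\rangle_X=\langle f,v\rangle_X$ for all $v\in U^N_{\rm per}(\epsilon\mathbb Z)$. Homogenized problem: $u^0\in U^N_\#(\epsilon\mathbb Z)$ with $\langle\psi^0Du^0,Dv\rangle_X=\langle f,v\rangle_X$ for all $v\in U^N_{\rm per}(\epsilon\mathbb Z)$. *)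

(* Defs.v *)
From mathcomp Require Import all_boot all_order all_algebra.
From mathcomp Require Import reals.
Set Implicit Arguments. Unset Strict Implicit. Unset Printing Implicit Defensive.
Import Order.TTheory GRing.Theory Num.Theory.
Local Open Scope ring_scope.

(* A lattice function on eps*Z is represented by its values at the indices:
   u : int -> R, with u i = u(X_i), X_i = eps * i, eps = 1/N.
   A two-scale function g : int -> int -> R, g i j = g(X_i, Y_j), Y_j = j. *)

Section Defs.
Variable R : realType.

Definition epsN (N : nat) : R := (N%:R)^-1.

Definition periodicN (N : nat) (u : int -> R) : Prop :=
  forall i : int, u (i + N%:Z) = u i.

Definition meanX (N : nat) (u : int -> R) : R :=
  (N%:R)^-1 * \sum_(1 <= i < N.+1) u i%:Z.

Definition innerX (N : nat) (u v : int -> R) : R :=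
  meanX N (fun i => u i * v i).

Definition Dop (N : nat) (u : int -> R) : int -> R :=
  fun i => (u (i + 1) - u i) / epsN N.

Definition L2norm (N : nat) (u : int -> R) : R :=
  Num.sqrt (meanX N (fun i => u i ^+ 2)).

Definition two_scale (N p : nat) (g : int -> int -> R) : Prop :=
  forall i j : int, g (i + N%:Z) j = g i j /\ g i (j + p%:Z) = g i j.

Definition DX (N : nat) (g : int -> int -> R) : int -> int -> R :=
  fun i j => (g (i + 1) j - g i j) / epsN N.

Definition Linf_Np (N p : nat) (g : int -> int -> R) : R :=
  \big[Num.max/0]_(1 <= i < N.+1) \big[Num.max/0]_(1 <= j < p.+1) `|g i%:Z j%:Z|.

Definition meanY (p : nat) (g : int -> int -> R) (i : int) : R :=
  (p%:R)^-1 * \sum_(1 <= j < p.+1) g i j%:Z.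

(* psi^eps(X_i) = psi(X_i, X_i/eps) = psi(X_i, Y_i) since X_i/eps = i *)
Definition psi_eps (psi : int -> int -> R) : int -> R := fun i => psi i i.

Definition psi0 (p : nat) (psi : int -> int -> R) : int -> R :=
  fun i => (meanY p (fun i' j => (psi i' j)^-1) i)^-1.

Definition solves (N : nat) (a f u : int -> R) : Prop :=
  periodicN N u /\ meanX N u = 0 /\
  forall v : int -> R, periodicN N v ->
    innerX N (fun i => a i * Dop N u i) (Dop N v) = innerX N f v.

End Defs.

(* Main.v *)
Require Import Defs.
From mathcomp Require Import all_boot all_order all_algebra.
From mathcomp Require Import reals ring lra zify.
Import Order.TTheory GRing.Theory Num.Theory.
Local Open Scope ring_scope.

Lemma natZS (k : nat) : (k%:Z + 1 = (k.+1)%:Z)%R.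
Proof. by rewrite -addn1 PoszD. Qed.

Lemma lebm (R : realType) (F : nat -> R) (m n i : nat) :
  (m <= i < n)%N -> F i <= \big[Num.max/0]_(m <= k < n) F k.
Proof.
move=> hi; have hd : (n - m <= n - m)%N by [].
move: hd hi; move: {2}(n - m)%N => d; elim: d m => [|d IH] m' hd hi.
  exfalso; lia.
rewrite big_ltn /=; last by lia.
rewrite le_max. have [->|ne] := eqVneq i m'; first by rewrite lexx.
apply/orP; right; apply: IH; lia.
Qed.

Lemma modz_ind (i k N : int) : 0 < N -> 1 <= i <= N -> 1 <= k <= N ->
  (modz (i - k) N = 0)%Z -> i = k.
Proof.
intros. have := divz_eq (i-k) N. rewrite H2 addr0.
set q := divz _ _.
have : (q <= -1) \/ q = 0 \/ (1 <= q) by lia.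
case=> [hq|[->|hq]].
- have : q * N <= - N. rewrite -mulN1r. apply: ler_wpM2r; lia. lia.
- lia.
- have : N <= q * N. rewrite -{1}(mul1r N). apply: ler_wpM2r; lia. lia.
Qed.

Lemma sum_ind (R : realType) (N k : nat) (h : int -> R) : (1 <= k <= N)%N ->
  \sum_(1 <= i < N.+1) h i%:Z * (if (modz (i%:Z - k%:Z) N%:Z == 0)%Z then 1 else 0)
  = h k%:Z.
Proof.
move=> hk.
rewrite (bigD1_seq k) /=; last by apply: iota_uniq.
  2: by rewrite mem_index_iota; lia.
rewrite subrr mod0z eqxx mulr1 big1_seq ?addr0 //.
move=> i /andP[ne]; rewrite mem_index_iota => hi.
case: ifP => [/eqP e|]; last by rewrite mulr0.
exfalso. move: ne => /eqP; apply. 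
have := @modz_ind i%:Z k%:Z N%:Z. 
move=> /(_ ltac:(lia) ltac:(lia) ltac:(lia) e). lia.
Qed.

Lemma sbp (R : realType) (N : nat) (s v : int -> R) :
  periodicN N s -> periodicN N v ->
  \sum_(1 <= i < N.+1) s i%:Z * (v (i%:Z + 1) - v i%:Z) =
  \sum_(1 <= i < N.+1) (s (i%:Z - 1) - s i%:Z) * v i%:Z.
Proof.
move=> ps pv.
have E : \sum_(1 <= i < N.+1) s i%:Z * v (i%:Z + 1) =
         \sum_(1 <= i < N.+1) s (i%:Z - 1) * v i%:Z.
  case: N ps pv => [|N] ps pv; first by rewrite !big_geq.
  rewrite big_nat_recr //= [in RHS]big_ltn //=.
  have -> : \sum_(1 <= i < N.+1) s i%:Z * v (i%:Z + 1) =
            \sum_(2 <= i < N.+2) s (i%:Z - 1) * v i%:Z.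
    rewrite [RHS]big_add1 /=. apply: eq_bigr => i _. by rewrite -natZS addrK.
  rewrite addrC. congr (_ + _).
  have h1 : s (N.+1)%:Z = s 0. by rewrite -(ps 0) add0r.
  have h2 : v ((N.+1)%:Z + 1) = v 1. by rewrite -(pv 1) addrC.
  by rewrite h1 h2 subrr.
rewrite (eq_bigr (fun i : nat => s i%:Z * v (i%:Z + 1) - s i%:Z * v i%:Z)); last by move=> i _; ring.
rewrite sumrB E -sumrB. apply: eq_bigr => i _; ring.
Qed.

Lemma flux (R : realType) (N : nat) (a f u : int -> R) : (0 < N)%N ->
  periodicN N a -> solves N a f u ->
  forall k : nat, (k < N)%N ->
  a k%:Z * Dop N u k%:Z - a (k.+1)%:Z * Dop N u (k.+1)%:Z = f (k.+1)%:Z / N%:R.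
Proof.
move=> N0 pa [pu [_ hw]] k kN.
set v := fun i : int => if (modz (i - (k.+1)%:Z) N%:Z == 0)%Z then (1:R) else 0.
have pv : periodicN N v by move=> i; rewrite /v addrAC modzDr.
have ps : periodicN N (fun i => a i * Dop N u i).
  by move=> i; rewrite /Dop pa (addrAC i N%:Z 1) pu pu.
have NZ : (N%:R : R) != 0 by rewrite pnatr_eq0 -lt0n.
have := hw v pv. rewrite /innerX /meanX.
have -> : \sum_(1 <= i < N.+1) (a i%:Z * Dop N u i%:Z) * Dop N v i%:Z =
  N%:R * \sum_(1 <= i < N.+1) (a i%:Z * Dop N u i%:Z) * (v (i%:Z+1) - v i%:Z).
  rewrite mulr_sumr; apply: eq_bigr => i _.
  have -> : Dop N v i%:Z = (v (i%:Z+1) - v i%:Z) * N%:R by rewrite /Dop /epsN invrK.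
  ring.
rewrite mulrA mulVf // mul1r (@sbp R N _ _ ps pv) /v.
rewrite (@sum_ind R N k.+1 (fun i => a (i - 1) * Dop N u (i - 1) - a i * Dop N u i)); last by lia.
rewrite (@sum_ind R N k.+1 f); last by lia.
rewrite -natZS addrK => ->. by rewrite mulrC.
Qed.

Lemma tele_D (R : realType) (N : nat) (u : int -> R) (k : nat) :
  \sum_(0 <= m < k) Dop N u (m.+1)%:Z = N%:R * (u (k.+1)%:Z - u 1).
Proof.
transitivity (N%:R * \sum_(0 <= m < k) (u (m.+2)%:Z - u (m.+1)%:Z)).
  rewrite mulr_sumr; apply: eq_bigr => m _; rewrite /Dop /epsN invrK natZS; ring.
by rewrite (telescope_sumr (fun n => u (n.+1)%:Z)).
Qed.

Lemma perj (R : realType) (N p : nat) (psi : int -> int -> R) :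
  two_scale N p psi -> forall (t : nat) x j, psi x (j + (t * p)%N%:Z) = psi x j.
Proof.
move=> h; elim=> [|t IH] x j; first by rewrite mul0n addr0.
by rewrite mulSnr PoszD addrA (h _ _).2 IH.
Qed.

Lemma per_eps (R : realType) (N p : nat) (psi : int -> int -> R) :
  two_scale N p psi -> (p %| N)%N -> periodicN N (psi_eps psi).
Proof.
move=> h /dvdnP[q hq] i; subst N. by rewrite /psi_eps (h _ _).1 (perj _ _ _ _ h).
Qed.

Lemma per_0 (R : realType) (N p : nat) (psi : int -> int -> R) :
  two_scale N p psi -> periodicN N (psi0 p psi).
Proof.
move=> h i. rewrite /psi0 /meanY. congr (_^-1); congr (_ * _).
by apply: eq_bigr => j _; rewrite (h _ _).1.
Qed.

Lemma lip_chain (R : realType) (N p : nat) (psi : int -> int -> R) (L : R) :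
  (forall i j : nat, (1 <= i <= N)%N -> (1 <= j <= p)%N ->
     `|psi (i.+1)%:Z j%:Z - psi i%:Z j%:Z| <= L) ->
  forall s n j : nat, (1 <= s)%N -> (s + n <= N.+1)%N -> (1 <= j <= p)%N ->
  `|psi (s+n)%N%:Z j%:Z - psi s%:Z j%:Z| <= n%:R * L.
Proof.
move=> hL s; elim=> [|n IH] j hs hn hj; first by rewrite addn0 subrr normr0 mul0r.
rewrite addnS.
rewrite (_ : psi (s+n).+1%:Z j%:Z - psi s%:Z j%:Z =
   (psi (s+n).+1%:Z j%:Z - psi (s+n)%N%:Z j%:Z) + (psi (s+n)%N%:Z j%:Z - psi s%:Z j%:Z)); last by ring.
apply: le_trans (ler_normD _ _) _.
rewrite -[n.+1]addn1 natrD mulrDl mul1r addrC.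
apply: lerD; first by apply: IH => //; lia.
apply: hL => //; lia.
Qed.

Lemma DX_bound (R : realType) (N p : nat) (psi : int -> int -> R) (C' : R) :
  (0 < N)%N -> Linf_Np N p (DX N psi) <= C' ->
  forall i j : nat, (1 <= i <= N)%N -> (1 <= j <= p)%N ->
  `|psi (i.+1)%:Z j%:Z - psi i%:Z j%:Z| <= `|C'| / N%:R.
Proof.
move=> N0 hL i j hi hj.
have Np : (0 : R) < N%:R by rewrite ltr0n.
rewrite ler_pdivlMr // -{1}(ger0_norm (ltW Np)) -normrM.
have -> : (psi (i.+1)%:Z j%:Z - psi i%:Z j%:Z) * N%:R = DX N psi i%:Z j%:Z.
  by rewrite /DX /epsN invrK natZS.
apply: le_trans (le_trans hL (ler_norm C')).
rewrite /Linf_Np.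
have h1 := lebm R (fun j0:nat => `|DX N psi i%:Z j0%:Z|) 1 p.+1 j.
apply: le_trans (h1 ltac:(lia)) _.
apply: (lebm R (fun i0 : nat => \big[Num.max/0]_(1 <= j0 < p.+1) `|DX N psi i0%:Z j0%:Z|) 1 N.+1 i).
lia.
Qed.

Lemma inv_diff (R : realType) (c x y : R) : 0 < c -> c <= x -> c <= y ->
  `|x^-1 - y^-1| <= `|x - y| / c^+2.
Proof.
move=> c0 cx cy.
have x0 : 0 < x by lra.
rewrite (_ : x^-1 - y^-1 = (y - x) / (x * y)); last first.
  field; apply/andP; split; apply: lt0r_neq0; lra.
rewrite normrM normfV (ger0_norm (x := x*y)); last by nra.
rewrite distrC. apply: ler_wpM2l => //.
rewrite lef_pV2 ?posrE; try nra.
Qed.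

Lemma meanY_bound (R : realType) (p : nat) (g : int -> int -> R) (lo hi : R) i :
  (0 < p)%N -> (forall j, lo <= g i j <= hi) -> lo <= meanY p g i <= hi.
Proof.
move=> p0 h. rewrite /meanY.
have Pp : (0 : R) < p%:R by rewrite ltr0n.
have E : forall x : R, p%:R^-1 * \sum_(1 <= j < p.+1) x = x.
  move=> x. rewrite sumr_const_nat subn1 /= -mulr_natr. field. lra.
apply/andP; split.
  rewrite -{1}(E lo). apply: ler_wpM2l; first by rewrite invr_ge0; lra.
  by apply: ler_sum_nat => j _; case/andP: (h j%:Z).
rewrite -{1}(E hi). apply: ler_wpM2l; first by rewrite invr_ge0; lra.
by apply: ler_sum_nat => j _; case/andP: (h j%:Z).
Qed.

Definition gg (R : realType) (p : nat) (psi : int -> int -> R) (m : nat) : R :=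
  (psi m%:Z m%:Z)^-1 - meanY p (fun i j => (psi i j)^-1) m%:Z.

Arguments gg {R}.
Arguments inv_diff {R c x y}.
Arguments lip_chain {R N p psi L}.

Lemma inv_bnd (R : realType) (c x : R) : 0 < c -> c <= x -> 0 <= x^-1 <= c^-1.
Proof.
move=> c0 cx. have x0 : 0 < x by lra.
rewrite invr_ge0 ltW //= lef_pV2 ?posrE //.
Qed.

Arguments inv_bnd {R c x}.

Lemma gg_bound (R : realType) (p : nat) (psi : int -> int -> R) (c : R) m :
  (0 < p)%N -> 0 < c -> (forall i j, c <= psi i j) -> `|gg p psi m| <= 2 / c.
Proof.
move=> p0 c0 hb. rewrite /gg.
have h1 := inv_bnd c0 (hb m%:Z m%:Z).
have h2 := @meanY_bound R p (fun i j => (psi i j)^-1) 0 c^-1 m%:Z p0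
   (fun j => inv_bnd c0 (hb m%:Z j)).
move: h1 h2. set a := _^-1. set b := meanY _ _ _.
move=> h1 h2. rewrite ler_norml. apply/andP; split; lra.
Qed.

Lemma block (R : realType) (N p : nat) (psi : int -> int -> R) (c L : R) (t : nat) :
  (0 < p)%N -> 0 < c -> (forall i j, c <= psi i j) -> two_scale N p psi ->
  (forall i j : nat, (1 <= i <= N)%N -> (1 <= j <= p)%N ->
     `|psi (i.+1)%:Z j%:Z - psi i%:Z j%:Z| <= L) ->
  (t * p + p <= N)%N ->
  `|\sum_(t * p <= m < t * p + p) gg p psi m.+1| <= p%:R * (2 * p%:R * L / c^+2).
Proof.
move=> p0 c0 hb hts hL htp.
rewrite -{1}(add0n (t * p)%N) big_addn addKn.
set M := 2 * p%:R * L / c^+2.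
set D := fun j : nat => (psi (t * p + j)%N%:Z j%:Z)^-1.
have Pp : (0:R) < p%:R by rewrite ltr0n.
have E : \sum_(0 <= m < p) gg p psi (m + t * p)%N.+1 =
  p%:R^-1 * \sum_(0 <= m < p) \sum_(1 <= j < p.+1)
      (D j - (psi (m + t * p)%N.+1%:Z j%:Z)^-1).
  rewrite mulr_sumr.
  rewrite [RHS](eq_bigr (fun m => p%:R^-1 * \sum_(1 <= j < p.+1) D j -
       meanY p (fun i j => (psi i j)^-1) (m + t * p)%N.+1%:Z)); last first.
    by move=> m _; rewrite sumrB mulrBr /meanY.
  rewrite sumrB [RHS]sumrB sumr_const_nat subn0.
  have -> : (p%:R^-1 * \sum_(1 <= j < p.+1) D j) *+ p = \sum_(1 <= j < p.+1) D j.
    by rewrite -mulr_natr; field; lra.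
  congr (_ - _).
  rewrite [RHS]big_add1 /=. apply: eq_bigr => m _.
  rewrite /D. have -> : (t * p + m.+1 = (m + t * p).+1)%N by lia.
  congr (_^-1). rewrite {2}(_ : (m + t * p)%N.+1%:Z = m.+1%:Z + (t * p)%N%:Z).
    by rewrite (perj _ _ _ _ hts).
  by rewrite -PoszD addSn.
rewrite E normrM (ger0_norm (x := p%:R^-1)); last by rewrite invr_ge0 ltW.
have B : forall m j : nat, (0 <= m < p)%N -> (1 <= j < p.+1)%N ->
   `|D j - (psi (m + t * p)%N.+1%:Z j%:Z)^-1| <= M.
  move=> m j hm hj. rewrite /D.
  apply: le_trans (inv_diff c0 (hb _ _) (hb _ _)) _.
  rewrite /M; apply: ler_wpM2r; first by rewrite invr_ge0 exprn_ge0 // ltW.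
  have hj' : (1 <= j <= p)%N by lia.
  have l1 := lip_chain hL (t * p)%N.+1 j.-1 j.
  have l2 := lip_chain hL (t * p)%N.+1 m j.
  rewrite (_ : ((t * p)%N.+1 + j.-1 = t * p + j)%N) in l1; last by lia.
  rewrite (_ : ((t * p)%N.+1 + m = (m + t * p).+1)%N) in l2; last by lia.
  have l1' := l1 ltac:(lia) ltac:(lia) hj'. have l2' := l2 ltac:(lia) ltac:(lia) hj'.
  have n1 : (j.-1%:R : R) <= p%:R by rewrite ler_nat; lia.
  have n2 : (m%:R : R) <= p%:R by rewrite ler_nat; lia.
  have L0 : 0 <= L.
    apply: le_trans (hL 1%N 1%N ltac:(lia) ltac:(lia)); exact: normr_ge0.
  move: l1' l2'.
  set A1 := psi _ _. set A2 := psi _ _. set A0 := psi _ _.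
  move=> l1' l2'.
  rewrite (_ : A1 - A0 = (A1 - A2) - (A0 - A2)); last by ring.
  apply: le_trans (ler_normB _ _) _.
  have : j.-1%:R * L <= p%:R * L by apply: ler_wpM2r.
  have : m%:R * L <= p%:R * L by apply: ler_wpM2r.
  lra.
have S : \sum_(0 <= m < p) \sum_(1 <= j < p.+1) `|D j - (psi (m + t * p)%N.+1%:Z j%:Z)^-1|
    <= \sum_(0 <= m < p) \sum_(1 <= j < p.+1) M.
  apply: ler_sum_nat => m hm; apply: ler_sum_nat => j hj; exact: B.
rewrite !sumr_const_nat !subn0 subn1 /= in S.
have T := le_trans (ler_norm_sum _ _ _) (le_trans (ler_sum_nat (fun m _ => ler_norm_sum _ _ _)) S).
have Pi : 0 <= (p%:R : R)^-1 by rewrite invr_ge0 ltW.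
apply: le_trans (ler_wpM2l Pi T) _.
rewrite -[M *+ p]mulr_natr -mulr_natr. rewrite le_eqVlt; apply/orP; left; apply/eqP; field; lra.
Qed.

Lemma Gbound (R : realType) (N p : nat) (psi : int -> int -> R) (c L : R) (k : nat) :
  (0 < p)%N -> 0 < c -> (forall i j, c <= psi i j) -> two_scale N p psi ->
  (forall i j : nat, (1 <= i <= N)%N -> (1 <= j <= p)%N ->
     `|psi (i.+1)%:Z j%:Z - psi i%:Z j%:Z| <= L) -> 0 <= L ->
  (k <= N)%N ->
  `|\sum_(0 <= m < k) gg p psi m.+1| <= N%:R * (2 * p%:R * L / c^+2) + p%:R * (2 / c).
Proof.
move=> p0 c0 hb hts hL L0 kN.
set M := 2 * p%:R * L / c^+2.
have M0 : 0 <= M.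
  rewrite /M; apply: divr_ge0; last by apply: exprn_ge0; apply: ltW.
  by apply: mulr_ge0 => //; apply: mulr_ge0.
have Gt : forall t, (t * p <= N)%N ->
    `|\sum_(0 <= m < t * p) gg p psi m.+1| <= (t * p)%N%:R * M.
  elim=> [|t IH] htp; first by rewrite mul0n big_geq // normr0 mul0r.
  rewrite mulSnr (big_cat_nat _ (n := (t * p)%N)) //=; last by lia.
  apply: le_trans (ler_normD _ _) _.
  rewrite natrD mulrDl. apply: lerD; first by apply: IH; lia.
  apply: (@block R N p psi c L t p0 c0 hb hts hL); lia.
have hk := divn_eq k p.
rewrite {1}(divn_eq k p) (big_cat_nat _ (n := (k %/ p * p)%N)) //=; last by lia.
apply: le_trans (ler_normD _ _) _.
apply: lerD.
  apply: le_trans (Gt _ _) _; first by lia.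
  apply: ler_wpM2r => //. rewrite ler_nat. lia.
apply: le_trans (ler_norm_sum _ _ _) _.
apply: le_trans (ler_sum_nat (fun m _ => @gg_bound R p psi c m.+1 p0 c0 hb)) _.
rewrite sumr_const_nat addKn -[X in X <= _]mulr_natr mulrC. apply: ler_wpM2r.
  by rewrite divr_ge0 ?ltW.
by rewrite ler_nat ltnW // ltn_pmod.
Qed.

Lemma psum_le (R : realType) (h : nat -> R) (k n : nat) : (k <= n)%N ->
  (forall m, 0 <= h m) -> \sum_(0 <= m < k) h m <= \sum_(0 <= m < n) h m.
Proof.
move=> kn h0. rewrite (big_cat_nat _ (n := k) (p := n)) //=.
rewrite lerDl. by apply: sumr_ge0 => i _.
Qed.

Lemma sig_bound (R : realType) (N : nat) (s q fa : nat -> R) :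
  (0 < N)%N -> (forall k, (k < N)%N -> s k - s k.+1 = fa k.+1 / N%:R) ->
  (forall m, 0 < q m) -> \sum_(0 <= m < N) s m.+1 * q m.+1 = 0 ->
  forall k, (1 <= k <= N)%N ->
  `|s k| <= 2 * (N%:R^-1 * \sum_(0 <= m < N) `|fa m.+1|).
Proof.
move=> N0 hfl q0 hz.
set F := N%:R^-1 * _.
have Np : (0:R) < N%:R by rewrite ltr0n.
have F0 : 0 <= F by apply: mulr_ge0; [rewrite invr_ge0 ltW|apply: sumr_ge0].
have r : forall k, (k < N)%N ->
   `|s k.+1 - s 1%N| <= N%:R^-1 * \sum_(0 <= m < k.+1) `|fa m.+1|.
  elim=> [|k IH] hk.
    rewrite subrr normr0. apply: mulr_ge0; [rewrite invr_ge0 ltW|apply: sumr_ge0] => //.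
  have e := hfl k.+1 hk.
  rewrite (_ : s k.+2 - s 1%N = (s k.+1 - s 1%N) - fa k.+2 / N%:R); last by rewrite -e; ring.
  apply: le_trans (ler_normB _ _) _.
  rewrite big_nat_recr //= mulrDr. apply: lerD; first by apply: IH; lia.
  by rewrite normrM normfV (ger0_norm (ltW Np)) mulrC.
have r' : forall k, (k < N)%N -> `|s k.+1 - s 1%N| <= F.
  move=> k hk. apply: le_trans (r k hk) _. apply: ler_wpM2l; first by rewrite invr_ge0 ltW.
  by apply: psum_le => //.
set Q := \sum_(0 <= m < N) q m.+1.
have Q0 : 0 < Q.
  rewrite /Q big_ltn //. apply: ltr_wpDr; last exact: q0.
  by apply: sumr_ge0 => i _; apply: ltW.
have e1 : s 1%N * Q = - \sum_(0 <= m < N) (s m.+1 - s 1%N) * q m.+1.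
  rewrite /Q mulr_sumr -sumrN.
  apply/eqP; rewrite -subr_eq0 -sumrB; apply/eqP.
  rewrite -[RHS]hz; apply: eq_bigr => m _; ring.
have e2 : `|s 1%N| * Q <= F * Q.
  rewrite -(ger0_norm (ltW Q0)) -normrM e1 normrN (ger0_norm (ltW Q0)).
  apply: le_trans (ler_norm_sum _ _ _) _.
  rewrite /Q mulr_sumr. apply: ler_sum_nat => m hm.
  rewrite normrM (ger0_norm (ltW (q0 _))). apply: ler_wpM2r; first exact: ltW.
  apply: r'; lia.
have s1 : `|s 1%N| <= F by rewrite -(ler_pM2r Q0).
move=> [|k] hk; first by lia.
rewrite (_ : s k.+1 = (s k.+1 - s 1%N) + s 1%N); last by ring.
apply: le_trans (ler_normD _ _) _.
have := r' k ltac:(lia). lra.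
Qed.

Lemma F_le_L2 (R : realType) (N : nat) (f : int -> R) : (0 < N)%N ->
  N%:R^-1 * \sum_(0 <= m < N) `|f (m.+1)%:Z| <= L2norm N f.
Proof.
move=> N0.
have Np : (0:R) < N%:R by rewrite ltr0n.
rewrite /L2norm /meanX big_add1 /=.
set F := N%:R^-1 * _.
set Q := N%:R^-1 * \sum_(0 <= i < N) f i.+1%:Z ^+ 2.
have Q0 : 0 <= Q by apply: mulr_ge0; [rewrite invr_ge0 ltW|apply: sumr_ge0 => i _; apply: sqr_ge0].
have key : forall t, 0 < t -> 2 * t * F <= Q + t ^+ 2.
  move=> t t0.
  have S : \sum_(0 <= m < N) 2 * t * `|f m.+1%:Z| <=
           \sum_(0 <= m < N) (f m.+1%:Z ^+ 2 + t ^+ 2).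
    apply: ler_sum_nat => m _.
    have := real_normK (num_real (f m.+1%:Z)). have := normr_ge0 (f m.+1%:Z).
    set x := `|_|. move=> hx hx2. rewrite -hx2. have := sqr_ge0 (x - t). nra.
  rewrite big_split /= sumr_const_nat subn0 -mulr_sumr in S.
  have Ni0 : 0 <= (N%:R : R)^-1 by rewrite invr_ge0 ltW.
  have := ler_wpM2l Ni0 S.
  have e2 : N%:R^-1 * (t ^+ 2 *+ N) = t ^+ 2 by rewrite -[t ^+ 2 *+ N]mulr_natr; field; lra.
  rewrite mulrDr e2 /F /Q. lra.
set s := Num.sqrt Q.
have s0 : 0 <= s by apply: sqrtr_ge0.
have sQ : s ^+ 2 = Q by apply: sqr_sqrtr.
have F0 : 0 <= F by apply: mulr_ge0; [rewrite invr_ge0 ltW|apply: sumr_ge0].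
case: (eqVneq s 0) => [s_eq|sne].
  rewrite s_eq; rewrite s_eq in sQ.
  rewrite leNgt; apply/negP => hF. have := key F hF. rewrite -sQ. nra.
have sp : 0 < s by rewrite lt_def sne s0.
have := key s sp. rewrite -sQ. nra.
Qed.

Lemma inv_bnd2 (R : realType) (c C x : R) : 0 < c -> c <= x <= C -> C^-1 <= x^-1 <= c^-1.
Proof.
move=> c0 /andP[h1 h2]. have x0 : 0 < x by lra. have C0 : 0 < C by lra.
by rewrite !lef_pV2 ?posrE // h1 h2.
Qed.

Arguments inv_bnd2 {R c C x}.
Arguments flux {R N a f u}.
Arguments F_le_L2 {R N}.

Lemma arith1 (R : realType) (x Bk BN n ci Ci T : R) : 0 <= ci -> 0 <= x -> 0 < Ci -> 0 < n ->
  Bk <= ci * n -> Ci * n <= BN -> x * BN <= T -> x * Bk <= T * (ci / Ci).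
Proof.
move=> hc x0 Ci0 n0 h1 h2 h3.
have e : ci / Ci = ci * Ci^-1 by [].
have Cii : Ci * Ci^-1 = 1 by rewrite mulfV //; apply: lt0r_neq0.
have Ci' : 0 < Ci^-1 by rewrite invr_gt0.
have h4 : x * Bk <= x * (ci * n) by apply: ler_wpM2l.
have h5 : x * (Ci * n) <= T by apply: le_trans h3; apply: ler_wpM2l.
have h6 : x * (ci * n) = (x * (Ci * n)) * (ci * Ci^-1).
  rewrite (_ : x * (Ci * n) * (ci * Ci^-1) = x * ci * n * (Ci * Ci^-1)); last by ring.
  rewrite Cii; ring.
apply: le_trans h4 _. rewrite h6.
by apply: ler_wpM2r => //; apply: mulr_ge0 => //; apply: ltW.
Qed.

Lemma sum0 (R : realType) (N : nat) (v : int -> R) : (0 < N)%N ->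
  meanX N v = 0 -> \sum_(0 <= m < N) v (m.+1)%:Z = 0.
Proof.
move=> N0; rewrite /meanX => /eqP; rewrite mulf_eq0 invr_eq0 pnatr_eq0 eqn0Ngt N0 /=.
by rewrite big_add1 /= => /eqP.
Qed.

Theorem theorem4p6 (R : realType) (p : nat) (c_psi C_psi C'_psi : R) :
  (0 < p)%N -> 0 < c_psi ->
  exists C3 : R,
    forall (N : nat) (psi : int -> int -> R) (f u u0 : int -> R),
      (0 < N)%N -> (p %| N)%N ->
      two_scale N p psi ->
      (forall i j : int, c_psi <= psi i j <= C_psi) ->
      Linf_Np N p (DX N psi) <= C'_psi ->
      periodicN N f -> meanX N f = 0 ->
      solves N (psi_eps psi) f u ->
      solves N (psi0 p psi) f u0 ->
      L2norm N (fun i => u0 i - u i) <= C3 * epsN R N * L2norm N f.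
Proof.
move=> p0 c0.
set K := 2 * p%:R * `|C'_psi| / c_psi ^+ 2 + p%:R * (2 / c_psi).
exists (6 * K * (C_psi / c_psi + 1)).
move=> N psi f u u0 N0 pN hts hb hL hfp hfm hu hu0.
have Np : (0:R) < N%:R by rewrite ltr0n.
have NZ : (N%:R : R) != 0 by apply: lt0r_neq0.
have Pp : (0:R) < p%:R by rewrite ltr0n.
have cC : c_psi <= C_psi by case/andP: (hb 0 0) => h1 h2; lra.
have C0 : 0 < C_psi by lra.
have hb1 : forall i j, c_psi <= psi i j by move=> i j; case/andP: (hb i j).
have K0 : 0 <= K.
  rewrite /K; apply: addr_ge0.
    apply: divr_ge0; [apply: mulr_ge0; [apply: mulr_ge0|apply: normr_ge0]|apply: exprn_ge0]; lra.
  apply: mulr_ge0; [lra|apply: divr_ge0; lra].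
set a := psi_eps psi. set b := psi0 p psi.
have pa : periodicN N a := per_eps _ _ _ _ hts pN.
have pb : periodicN N b := per_0 _ _ _ _ hts.
have ainv : forall i, C_psi^-1 <= (a i)^-1 <= c_psi^-1 by move=> i; exact: (inv_bnd2 c0 (hb i i)).
have binv : forall i, C_psi^-1 <= (b i)^-1 <= c_psi^-1.
  move=> i; rewrite /b /psi0 invrK. apply: (@meanY_bound R p _ C_psi^-1 c_psi^-1 i p0) => j. exact: (inv_bnd2 c0 (hb i j)).
have apos : forall i, 0 < a i.
  move=> i; rewrite -invr_gt0; case/andP: (ainv i) => h _.
  apply: lt_le_trans h; by rewrite invr_gt0.
have bpos : forall i, 0 < b i.
  move=> i; rewrite -invr_gt0; case/andP: (binv i) => h _.
  apply: lt_le_trans h; by rewrite invr_gt0.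
have fu := flux N0 pa hu. have fu0 := flux N0 pb hu0.
set sg := fun k : nat => a k%:Z * Dop N u k%:Z.
set ta := fun k : nat => b k%:Z * Dop N u0 k%:Z.
have hd : forall k, (k <= N)%N -> ta k - sg k = ta 0%N - sg 0%N.
  elim=> [//|k IH] hk. rewrite -IH; last by lia.
  have e1 := fu k hk. have e2 := fu0 k hk. rewrite /ta /sg. lra.
set d := ta 0%N - sg 0%N.
set F := N%:R^-1 * \sum_(0 <= m < N) `|f (m.+1)%:Z|.
have F0 : 0 <= F by apply: mulr_ge0; [rewrite invr_ge0 ltW|apply: sumr_ge0].
have FL : F <= L2norm N f := F_le_L2 f N0.
have Ni0 : 0 <= (N%:R : R)^-1 by rewrite invr_ge0 ltW.
have hz : \sum_(0 <= m < N) sg m.+1 * (a (m.+1)%:Z)^-1 = 0.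
  rewrite (eq_bigr (fun m => Dop N u (m.+1)%:Z)); last first.
    move=> m _; rewrite /sg mulrAC mulfV ?mul1r //; apply: lt0r_neq0; exact: apos.
  by rewrite tele_D -natZS (addrC N%:Z 1) (hu.1 1) subrr mulr0.
have sgb := @sig_bound R N sg (fun m : nat => (a m%:Z)^-1) (fun m : nat => f m%:Z) N0 fu
   (fun m => ltac:(rewrite invr_gt0; exact: apos)) hz.
set g := fun m : nat => gg p psi m.
have gE : forall m : nat, g m = (a m%:Z)^-1 - (b m%:Z)^-1
  by move=> m; rewrite /g /gg /b /psi0 invrK.
have hD := @DX_bound R N p psi C'_psi N0 hL.
have cZ : c_psi != 0 by apply: lt0r_neq0.
have Gb : forall k, (k <= N)%N -> `|\sum_(0 <= m < k) g m.+1| <= K.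
  move=> k hk.
  have := @Gbound R N p psi c_psi (`|C'_psi| / N%:R) k p0 c0 hb1 hts hD
     (divr_ge0 (normr_ge0 _) (ltW Np)) hk.
  have -> : N%:R * (2 * p%:R * (`|C'_psi| / N%:R) / c_psi ^+ 2) =
     2 * p%:R * `|C'_psi| / c_psi ^+ 2 by field; rewrite ?NZ ?cZ.
  done.
set G := fun k => \sum_(0 <= m < k) g m.+1.
set S := fun k => \sum_(0 <= m < k) sg m.+1 * g m.+1.
have Sid : forall k, (k <= N)%N ->
    S k = sg k * G k + \sum_(0 <= m < k) (f (m.+1)%:Z / N%:R) * G m.
  elim=> [|k IH] hk; first by rewrite /S /G !big_geq //; ring.
  have IH' := IH (ltnW hk). rewrite /S /G in IH'.
  have e : sg k - sg k.+1 = f k.+1%:Z / N%:R := fu k hk.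
  rewrite /S /G !big_nat_recr //= IH' -e. ring.
have Sb : forall k, (k <= N)%N -> `|S k| <= 3 * F * K.
  move=> k hk; rewrite Sid //.
  apply: le_trans (ler_normD _ _) _.
  have T1 : `|sg k * G k| <= 2 * F * K.
    case: k hk => [|k] hk.
      rewrite /G big_geq // mulr0 normr0. by apply: mulr_ge0 => //; apply: mulr_ge0.
    have s1 := sgb k.+1 hk.
    have g1 := Gb k.+1 hk.
    rewrite normrM. exact: (ler_pM (normr_ge0 _) (normr_ge0 _) s1 g1).
  have T2 : `|\sum_(0 <= m < k) (f (m.+1)%:Z / N%:R) * G m| <= F * K.
    apply: le_trans (ler_norm_sum _ _ _) _.
    apply: le_trans (_ : _ <= \sum_(0 <= m < k) `|f (m.+1)%:Z| * (N%:R^-1 * K)) _.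
      apply: ler_sum_nat => m hm.
      rewrite normrM (normrM (f _)) normfV (ger0_norm (ltW Np)) -mulrA.
      apply: ler_wpM2l; first exact: normr_ge0.
      apply: ler_wpM2l => //. apply: Gb; move/andP: hm => [_ hm]; exact: leq_trans (ltnW hm) hk.
    rewrite -mulr_suml.
    have := ler_wpM2r (mulr_ge0 Ni0 K0) (@psum_le R (fun m => `|f (m.+1)%:Z|) k N hk (fun m => normr_ge0 _)).
    move=> h; apply: le_trans h _; rewrite le_eqVlt; apply/orP; left; apply/eqP; rewrite /F; ring.
  apply: le_trans (lerD T1 T2) _; rewrite le_eqVlt; apply/orP; left; apply/eqP; ring.
have Dw : forall m : nat, (m <= N)%N ->
    Dop N u0 m%:Z - Dop N u m%:Z = d * (b m%:Z)^-1 - sg m * g m.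
  move=> m hm. have e := hd m hm. rewrite gE /d -e /ta /sg.
  have az := lt0r_neq0 (apos m%:Z). have bz := lt0r_neq0 (bpos m%:Z).
  by field; rewrite az bz.
set w := fun i => u0 i - u i.
set Bs := fun k => \sum_(0 <= m < k) (b (m.+1)%:Z)^-1.
have Wid : forall k, (k <= N)%N -> N%:R * (w (k.+1)%:Z - w 1) = d * Bs k - S k.
  move=> k hk.
  rewrite (_ : N%:R * (w (k.+1)%:Z - w 1) =
     \sum_(0 <= m < k) Dop N u0 (m.+1)%:Z - \sum_(0 <= m < k) Dop N u (m.+1)%:Z);
     last by rewrite !tele_D /w; ring.
  rewrite -sumrB (@eq_big_nat _ _ _ 0 k _ (fun m => d * (b (m.+1)%:Z)^-1 - sg m.+1 * g m.+1)); last first.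
    move=> m hm; apply: Dw; move/andP: hm => [_ hm]; exact: leq_trans hm hk.
  by rewrite sumrB -mulr_sumr.
have BsN : C_psi^-1 * N%:R <= Bs N.
  rewrite mulr_natr -[N in _ *+ N]subn0 -sumr_const_nat.
  by apply: ler_sum_nat => m _; case/andP: (binv (m.+1)%:Z).
have Bsk : forall k, (k <= N)%N -> Bs k <= c_psi^-1 * N%:R.
  move=> k hk. apply: (@le_trans _ _ (c_psi^-1 * k%:R)).
    rewrite mulr_natr -[k in _ *+ k]subn0 -sumr_const_nat.
    by apply: ler_sum_nat => m _; case/andP: (binv (m.+1)%:Z).
  apply: ler_wpM2l; first by rewrite invr_ge0 ltW.
  by rewrite ler_nat.
have wper : w (N.+1)%:Z = w 1.
  by rewrite -natZS (addrC N%:Z 1) /w (hu.1 1) (hu0.1 1).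
have db : `|d| * Bs N <= 3 * F * K.
  have := Wid N (leqnn N). rewrite wper subrr mulr0 => /eqP; rewrite eq_sym subr_eq0 => /eqP e.
  have Bs0 : 0 <= Bs N by apply: sumr_ge0 => m _; apply: ltW; rewrite invr_gt0.
  rewrite -(ger0_norm Bs0) -normrM e. exact: Sb.
set M := 3 * F * K * (C_psi / c_psi + 1).
have Wb : forall k, (k < N)%N -> N%:R * `|w (k.+1)%:Z - w 1| <= M.
  move=> k hk.
  rewrite -(ger0_norm (ltW Np)) -normrM Wid; last exact: ltnW.
  apply: le_trans (ler_normB _ _) _.
  have h1 : `|d * Bs k| <= 3 * F * K * (c_psi^-1 / C_psi^-1).
    have Bk0 : 0 <= Bs k by apply: sumr_ge0 => m _; apply: ltW; rewrite invr_gt0.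
    rewrite normrM (ger0_norm Bk0).
    have ci0 : 0 <= c_psi^-1 by rewrite invr_ge0 ltW.
    apply: (@arith1 R _ _ _ _ _ _ _ ci0 (normr_ge0 d) _ Np (Bsk k (ltnW hk)) BsN db).
    by rewrite invr_gt0.
  have h2 := Sb k (ltnW hk).
  have -> : M = 3 * F * K * (c_psi^-1 / C_psi^-1) + 3 * F * K.
    rewrite /M invrK; ring.
  exact: lerD.
have meanw : \sum_(0 <= m < N) w (m.+1)%:Z = 0.
  by rewrite /w sumrB (@sum0 R N u0 N0 hu0.2.1) (@sum0 R N u N0 hu.2.1) subrr.
have w1b : N%:R * `|w 1| <= M.
  have e : N%:R * w 1 = \sum_(0 <= m < N) (w 1 - w (m.+1)%:Z).
    by rewrite sumrB meanw subr0 sumr_const_nat subn0 mulr_natl.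
  rewrite -(ger0_norm (ltW Np)) -normrM e.
  rewrite -(ler_pM2l Np).
  apply: le_trans (ler_wpM2l (ltW Np) (ler_norm_sum _ _ _)) _.
  have EM : M *+ N = \sum_(0 <= m < N) M by rewrite sumr_const_nat subn0.
  rewrite mulr_sumr (mulrC N%:R M) mulr_natr EM.
  apply: ler_sum_nat => m hm. rewrite distrC. apply: Wb. by move/andP: hm => [_ hm].
have wb : forall m, (m < N)%N -> N%:R * `|w (m.+1)%:Z| <= 2 * M.
  move=> m hm. have h1 := Wb m hm.
  have h2 := ler_normD (w (m.+1)%:Z - w 1) (w 1). rewrite subrK in h2.
  apply: le_trans (ler_wpM2l (ltW Np) h2) _. rewrite mulrDr.
  have -> : 2 * M = M + M by ring.
  exact: lerD.
have M0 : 0 <= M.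
  rewrite /M; apply: mulr_ge0; first by apply: mulr_ge0 => //; apply: mulr_ge0.
  apply: addr_ge0 => //. apply: divr_ge0; apply: ltW => //.
set B := 2 * M / N%:R.
have B0 : 0 <= B by rewrite /B; apply: divr_ge0; [apply: mulr_ge0|apply: ltW].
have wB : forall m, (0 <= m < N)%N -> w (m.+1)%:Z ^+ 2 <= B ^+ 2.
  move=> m hm. have hm' : (m < N)%N by move/andP: hm => [_ ->].
  have hw : `|w (m.+1)%:Z| <= B by rewrite /B ler_pdivlMr // mulrC; apply: wb.
  rewrite -real_normK ?num_real // !expr2.
  exact: (ler_pM (normr_ge0 _) (normr_ge0 _) hw hw).
have L2w : L2norm N w <= B.
  rewrite /L2norm /meanX big_add1 /=.
  rewrite -(ger0_norm B0) -sqrtr_sqr ler_sqrt; last exact: sqr_ge0.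
  apply: le_trans (ler_wpM2l Ni0 (ler_sum_nat wB)) _.
  rewrite sumr_const_nat subn0 -[B ^+ 2 *+ N]mulr_natr.
  rewrite le_eqVlt; apply/orP; left; apply/eqP; field; exact: NZ.
apply: le_trans L2w _.
have E : B = (6 * K * (C_psi / c_psi + 1) * epsN R N) * F.
  rewrite /B /M /epsN; ring.
rewrite E. apply: ler_wpM2l => //.
apply: mulr_ge0 => //. apply: mulr_ge0; first by apply: mulr_ge0.
  apply: addr_ge0 => //. apply: divr_ge0; apply: ltW => //.
Qed.
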